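(* Let $\alpha,\beta>0$ and $\tau>0$ with $\tau^\alpha<1$. If $A\in\mathcal B(X)$ is a bounded operator on a Banach space $X$ with $\|A\|<1$, then for each $n\in\mathbb N_0$ the series $\sum_{j=0}^\infty k_\tau^{\alpha j+\beta}(n)A^j$ converges in operator norm, and $A$ generates the discrete $(\alpha,\beta)$-resolvent family $\{S_{\alpha,\beta}^n\}_{n\in\mathbb{N}_0}$ given by $$S_{\alpha,\beta}^n=\sum_{j=0}^\infty k_\tau^{\alpha j+\beta}(n)A^j,\qquad n\in\mathbb N_0.$$
   Context: For $\gamma>0$ and $n\in\mathbb{N}_0$ let $k_\tau^\gamma(n):=\frac{\tau^{\gamma-1}\Gamma(\gamma+n)}{\Gamma(\gamma)\Gamma(n+1)}$. For $\alpha,\beta>0$, a sequence $\{S_{\alpha,\beta}^n\}_{n\in\mathbb{N}_0}\subset\mathcal{B}(X)$ is called a discrete $(\alpha,\beta)$-resolvent family generated by the closed operator $A:D(A)\subset X\to X$ if (1) $S^n_{\alpha,\beta}x\in D(A)$ for all $x\in X$, $n\in\mathbb N_0$, and $AS_{\alpha,\beta}^nx=S_{\alpha,\beta}^nAx$ for all $x\in D(A)$, $n\in\mathbb{N}_0$; (2) for every $x\in X$ and $n\in\mathbb{N}_0$, $S_{\alpha,\beta}^nx=k^\beta_\tau(n)x+\tau A\sum_{j=0}^n k^\alpha_\tau(n-j)S_{\alpha,\beta}^jx$. *)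

(* Defs.v *)
From HB Require Import structures.
From mathcomp Require Import all_boot all_order all_algebra.
From mathcomp Require Import all_classical all_reals all_analysis.
Set Implicit Arguments. Unset Strict Implicit. Unset Printing Implicit Defensive.
Import Order.TTheory GRing.Theory Num.Theory.
Import numFieldNormedType.Exports.
Local Open Scope classical_set_scope.
Local Open Scope ring_scope.

(* k_tau^gamma(n) = tau^(gamma-1) Gamma(gamma+n) / (Gamma(gamma) Gamma(n+1)),
   written with Gamma(gamma+n)/Gamma(gamma) = gamma (gamma+1) ... (gamma+n-1)
   and Gamma(n+1) = n!. *)
Definition kdisc {R : realType} (tau gamma : R) (n : nat) : R :=
  tau `^ (gamma - 1) * (\prod_(i < n) (gamma + i%:R)) / (n`!)%:R.

Section Ops.
Context {R : realType} {X : normedModType R}.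

Definition bounded_op (A : X -> X) : Prop :=
  (forall (a : R) (x y : X), A (a *: x + y) = a *: A x + A y) /\
  exists C : R, forall x : X, `|A x| <= C * `|x|.

Definition opnorm (A : X -> X) : R :=
  sup [set `|A x| | x in [set x : X | `|x| <= 1]].

Definition oppow (A : X -> X) (j : nat) : X -> X := iter j A.

Definition closed_op (D : set X) (A : X -> X) : Prop :=
  closed [set p : X * X | D p.1 /\ p.2 = A p.1].

(* discrete (alpha,beta)-resolvent family generated by the closed
   operator A : D(A) ⊂ X -> X (values of A outside D are irrelevant) *)
Definition discrete_resolvent (tau alpha beta : R) (D : set X) (A : X -> X)
  (S : nat -> X -> X) : Prop :=
  closed_op D A /\
  (forall n, bounded_op (S n)) /\
  (forall n x, D (S n x)) /\
  (forall n x, D x -> A (S n x) = S n (A x)) /\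
  (forall n x, S n x = kdisc tau beta n *: x +
      tau *: A (\sum_(j < n.+1) kdisc tau alpha (n - j) *: S j x)).
End Ops.

(* Main.v *)
Require Import Defs.
From HB Require Import structures.
From mathcomp Require Import all_boot all_order all_algebra.
From mathcomp Require Import all_classical all_reals all_analysis.
From mathcomp Require Import ring lra.
Set Implicit Arguments. Unset Strict Implicit. Unset Printing Implicit Defensive.
Import Order.TTheory GRing.Theory Num.Theory.
Import numFieldNormedType.Exports.
Local Open Scope classical_set_scope.
Local Open Scope ring_scope.

Section Alg.
Variable R : realType.

Definition Kf (a : R) (n : nat) : R := (\prod_(i < n) (a + i%:R)) / (n`!)%:R.

Lemma Kf0 a : Kf a 0 = 1.
Proof. by rewrite /Kf big_ord0 fact0 divr1. Qed.

Lemma KfS a n : n.+1%:R * Kf a n.+1 = (a + n%:R) * Kf a n.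
Proof.
rewrite /Kf big_ord_recr /= factS natrM.
have h1 : (n`!)%:R != 0 :> R by rewrite pnatr_eq0 -lt0n fact_gt0.
have h2 : (n.+1)%:R != 0 :> R by rewrite pnatr_eq0.
field; by apply/andP.
Qed.

Definition Vf a b n := \sum_(0 <= m < n.+1) Kf a (n - m) * Kf b m.

Lemma Vf_rec a b n : n.+1%:R * Vf a b n.+1 = (a + b + n%:R) * Vf a b n.
Proof.
rewrite /Vf mulr_sumr.
rewrite (eq_big_nat _ _ (F2 := fun m => (n.+1 - m)%:R * Kf a (n.+1 - m) * Kf b m
   + (m%:R * Kf b m) * Kf a (n.+1 - m))); last first.
  move=> m /andP[_ hm].
  have -> : n.+1%:R = (n.+1 - m)%:R + m%:R :> R by rewrite -natrD subnK // -ltnS.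
  ring.
rewrite big_split /= big_nat_recr //= subnn.
have e0 : forall x y : R, 0%:R * x * y = 0 by move=> x y; rewrite mulr0n !mul0r.
rewrite e0.
rewrite addr0.
rewrite [X in _ + X = _]big_nat_recl //=.
rewrite e0.
rewrite add0r.
rewrite mulr_sumr -big_split /=.
apply: eq_big_nat => m /andP[_ hm].
rewrite subSn // KfS subSS KfS.
have -> : (a + b + n%:R) = (a + (n - m)%:R) + (b + m%:R).
  by rewrite natrB //; ring.
ring.
Qed.

Lemma Vf_K a b n : Vf a b n = Kf (a + b) n.
Proof.
elim: n => [|n IH].
  by rewrite /Vf big_nat1 !Kf0 mulr1.
have h2 : (n.+1)%:R != 0 :> R by rewrite pnatr_eq0.
apply: (mulfI h2); by rewrite Vf_rec KfS IH.
Qed.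


Lemma bern (x : R) n : -1 <= x -> 1 + n%:R * x <= (1 + x) ^+ n.
Proof.
move=> hx; elim: n => [|n IH]; first by rewrite expr0 mulr0n mul0r addr0.
rewrite exprS -natr1.
have h1 : 0 <= 1 + x by lra.
have h2 := ler_wpM2l h1 IH.
have h3 : 0 <= n%:R * (x * x) :> R by apply: mulr_ge0; [exact: ler0n | rewrite -expr2; exact: sqr_ge0].
nra.
Qed.

Lemma poly_geom n (rho : R) : 0 <= rho -> rho < 1 ->
  exists C r : R, [/\ 0 <= C, 0 < r, r < 1 &
    forall j : nat, j.+1%:R ^+ n * rho ^+ j <= C * r ^+ j].
Proof.
move=> rh0 rh1.
have hn : 0 < n.+1%:R :> R by rewrite ltr0n.
set d := (1 - rho) / (2 * n.+1%:R).
have d0 : 0 < d by apply: divr_gt0; lra.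
have nd : n%:R * d <= (1 - rho) / 2.
  rewrite /d mulrA ler_pdivrMr; last by lra.
  have : n%:R <= n.+1%:R :> R by rewrite ler_nat.
  rewrite (_ : (1 - rho) / 2 * (2 * n.+1%:R) = (1 - rho) * n.+1%:R); last by field.
  move=> h; rewrite mulrC; apply: ler_wpM2l => //; lra.
have d1 : d <= 1.
  rewrite /d ler_pdivrMr; last by lra.
  have : 1 <= n.+1%:R :> R by rewrite ler1n.
  lra.
set P := (1 + d) ^+ n.
have P0 : 0 < P by apply: exprn_gt0; lra.
have hP : P * (1 - n%:R * d) <= 1.
  have hb' : 1 - n%:R * d <= (1 - d) ^+ n by rewrite -mulrN; apply: bern; lra.
  apply: le_trans (ler_wpM2l (ltW P0) hb') _.
  rewrite /P -exprMn; apply: exprn_ile1; nra.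
set r0 := P * rho.
have r00 : 0 <= r0 by apply: mulr_ge0 => //; exact: ltW.
have r01 : r0 < 1.
  have h1 : P * rho < P by rewrite -[X in _ < X]mulr1 ltr_pM2l.
  have h2 : P * ((1 + rho)/2) <= 1.
    apply: le_trans hP; apply: ler_wpM2l; [exact: ltW | lra].
  rewrite /r0; lra.
exists (d ^-1 ^+ n), ((1 + r0) / 2); split.
- by apply: exprn_ge0; rewrite invr_ge0; exact: ltW.
- lra.
- lra.
move=> j.
have hj : j.+1%:R * d <= (1 + d) ^+ j.
  have hb : -1 <= d by lra.
  have hb2 := @bern d j hb.
  rewrite -natr1 mulrDl mul1r.
  have : 0 <= j%:R * d by apply: mulr_ge0; [exact: ler0n | exact: ltW].
  lra.
have hj2 : j.+1%:R <= d^-1 * (1 + d) ^+ j.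
  by rewrite mulrC ler_pdivlMr.
have hj3 : j.+1%:R ^+ n <= d ^-1 ^+ n * (P ^+ j).
  rewrite /P exprAC -exprMn; apply: lerXn2r => //; rewrite ?nnegrE ?ler0n //.
  by apply: mulr_ge0; [rewrite invr_ge0; exact: ltW | apply: exprn_ge0; lra].
apply: (le_trans (y := d ^-1 ^+ n * P ^+ j * rho ^+ j)).
  by apply: ler_wpM2r => //; exact: exprn_ge0.
rewrite -mulrA -exprMn; apply: ler_wpM2l; first by apply: exprn_ge0; rewrite invr_ge0; exact: ltW.
apply: lerXn2r; rewrite ?nnegrE //.
all: try lra.
rewrite -/r0; lra.
Qed.

Lemma kdisc_ge0 (tau g : R) n : 0 < g -> 0 <= kdisc tau g n.
Proof.
move=> g0; rewrite /kdisc; apply: mulr_ge0; last by rewrite invr_ge0 ler0n.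
apply: mulr_ge0; first exact: powR_ge0.
apply: prodr_ge0 => i _; apply: addr_ge0; [exact: ltW | exact: ler0n].
Qed.

Lemma coef_geom (tau alpha beta q : R) n : 0 < tau -> 0 < alpha -> 0 < beta ->
  tau `^ alpha < 1 -> 0 <= q -> q < 1 ->
  exists C r : R, [/\ 0 <= C, 0 < r, r < 1 &
    forall j : nat, kdisc tau (alpha * j%:R + beta) n * q ^+ j <= C * r ^+ j].
Proof.
move=> t0 a0 b0 ta1 q0 q1.
set rho := tau `^ alpha * q.
have ta0 : 0 <= tau `^ alpha by exact: powR_ge0.
have rh0 : 0 <= rho by exact: mulr_ge0.
have rh1 : rho < 1.
  apply: le_lt_trans ta1; rewrite /rho -[X in _ <= X]mulr1; apply: ler_wpM2l => //; exact: ltW.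
have [C0 [r [C00 r0 r1 hC]]] := poly_geom n rh0 rh1.
set M := alpha + beta + n%:R.
have M0 : 0 <= M by rewrite /M; have := ler0n R n; lra.
set E := tau `^ (beta - 1) / (n`!)%:R.
have E0 : 0 <= E by apply: mulr_ge0; [exact: powR_ge0 | rewrite invr_ge0 ler0n].
exists (E * M ^+ n * C0), r; split => //.
  by apply: mulr_ge0 => //; apply: mulr_ge0 => //; exact: exprn_ge0.
move=> j.
have eq1 : kdisc tau (alpha * j%:R + beta) n * q ^+ j =
   E * (\prod_(i < n) (alpha * j%:R + beta + i%:R)) * rho ^+ j.
  rewrite /kdisc /E /rho -addrA (@powRD _ tau (alpha * j%:R) (beta - 1)); last first.
    by apply/implyP => _; exact: lt0r_neq0.
  rewrite powRrM powR_mulrn // exprMn; ring.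
rewrite eq1.
have hprod : \prod_(i < n) (alpha * j%:R + beta + i%:R) <= M ^+ n * j.+1%:R ^+ n.
  rewrite -exprMn -[n in X in _ <= X]card_ord -prodr_const.
  apply: ler_prod => i _; apply/andP; split.
    apply: addr_ge0; last exact: ler0n.
    apply: addr_ge0; last exact: ltW.
    by apply: mulr_ge0; [exact: ltW | exact: ler0n].
  have hi : i%:R <= n%:R :> R by rewrite ler_nat ltnW.
  have hj : 0 <= j%:R :> R by exact: ler0n.
  have hn : 0 <= n%:R :> R by exact: ler0n.
  rewrite /M -natr1; nra.
apply: (le_trans (y := E * (M ^+ n * j.+1%:R ^+ n) * rho ^+ j)).
  by apply: ler_wpM2r; [exact: exprn_ge0 | exact: ler_wpM2l].
have h5 : M ^+ n * (j.+1%:R ^+ n * rho ^+ j) <= M ^+ n * (C0 * r ^+ j).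
  by apply: ler_wpM2l; [exact: exprn_ge0 | exact: hC].
have := ler_wpM2l E0 h5. by rewrite !mulrA.
Qed.
End Alg.

Section Op.
Variables (R : realType) (X : completeNormedModType R).
Local Open Scope classical_set_scope.

Section Lin.
Variables (B : X -> X) (hB : bounded_op B).

Lemma lin_add x y : B (x + y) = B x + B y.
Proof. by have := hB.1 1 x y; rewrite !scale1r. Qed.

Lemma lin0 : B 0 = 0.
Proof. have h := lin_add 0 0; rewrite addr0 in h; by apply: (addrI (B 0)); rewrite -h addr0. Qed.

Lemma linZ a x : B (a *: x) = a *: B x.
Proof. by have := hB.1 a x 0; rewrite !addr0 lin0 addr0. Qed.

Lemma linB x y : B (x - y) = B x - B y.
Proof. by rewrite -scaleN1r lin_add linZ scaleN1r. Qed.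

Lemma lin_sum I (r : seq I) (P : pred I) (F : I -> X) :
  B (\sum_(i <- r | P i) F i) = \sum_(i <- r | P i) B (F i).
Proof. exact: (big_morph B lin_add lin0). Qed.

End Lin.

Lemma opnorm_bnd (B : X -> X) (b : R) : (forall x, `|B x| <= b * `|x|) ->
  has_ubound [set `|B x| | x in [set x : X | `|x| <= 1]].
Proof.
move=> H; exists `|b| => _ [x hx <-].
apply: le_trans (H x) _.
apply: le_trans (ler_wpM2r (normr_ge0 x) (ler_norm b)) _.
by rewrite -[X in _ <= X]mulr1; apply: ler_wpM2l.
Qed.

Lemma opnorm_ge (B : X -> X) (b : R) : (forall x, `|B x| <= b * `|x|) ->
  forall x, `|x| <= 1 -> `|B x| <= opnorm B.
Proof. by move=> H x hx; rewrite /opnorm; apply: (ub_le_sup (opnorm_bnd H)); exists x. Qed.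

Lemma opnorm_ge0 (B : X -> X) (b : R) : (forall x, `|B x| <= b * `|x|) -> 0 <= opnorm B.
Proof.
move=> H; have h : `|B 0| <= opnorm B by apply: (opnorm_ge H); rewrite normr0.
exact: le_trans (normr_ge0 _) h.
Qed.

Lemma opnorm_le (B : X -> X) (b : R) : 0 <= b -> (forall x, `|B x| <= b * `|x|) ->
  opnorm B <= b.
Proof.
move=> b0 H; rewrite /opnorm; apply: ge_sup.
  by exists `|B 0|; exists 0 => //=; rewrite normr0.
move=> _ [x hx <-]; apply: le_trans (H x) _.
by rewrite -[X in _ <= X]mulr1; apply: ler_wpM2l.
Qed.

Lemma opnorm_bound (B : X -> X) : bounded_op B -> forall x, `|B x| <= opnorm B * `|x|.
Proof.
move=> hB; have [hl [C hC]] := hB; move=> x.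
have [->|x0] := eqVneq x 0; first by rewrite lin0 // !normr0 mulr0.
have nx : 0 < `|x| by rewrite normr_gt0.
set y := `|x|^-1 *: x.
have ny : `|y| = 1 by rewrite /y normrZ normfV normr_id mulVf // normr_eq0.
have := opnorm_ge hC (x := y); rewrite ny lexx => /(_ isT).
rewrite /y linZ // normrZ normfV normr_id mulrC.
by rewrite ler_pdivrMr.
Qed.

Lemma oppowS (B : X -> X) j x : oppow B j.+1 x = B (oppow B j x).
Proof. by []. Qed.

Lemma oppow_bound (B : X -> X) : bounded_op B ->
  forall j x, `|oppow B j x| <= opnorm B ^+ j * `|x|.
Proof.
move=> hB; have [hl [C hC]] := hB.
elim=> [|j IH] x; first by rewrite expr0 mul1r.
rewrite oppowS; apply: le_trans (opnorm_bound hB _) _.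
rewrite exprS -mulrA; apply: ler_wpM2l => //; exact: (opnorm_ge0 hC).
Qed.

Lemma oppow_lin (B : X -> X) : bounded_op B -> forall j, bounded_op (oppow B j).
Proof.
move=> hB; elim=> [|j [IHl [C IHC]]].
  by split => //; exists 1 => x; rewrite mul1r.
split.
  by move=> a x y; rewrite !oppowS IHl; exact: hB.1.
exists (opnorm B * C) => x; rewrite oppowS; apply: le_trans (opnorm_bound hB _) _.
rewrite -mulrA; apply: ler_wpM2l => //; have [_ [D hD]] := hB; exact: (opnorm_ge0 hD).
Qed.

Lemma cvg_op (B : X -> X) (f : nat -> X) (l : X) : bounded_op B ->
  f @ \oo --> l -> (fun N => B (f N)) @ \oo --> B l.
Proof.
move=> hB /cvgrPdist_le hf; apply/cvgrPdist_le => e e0.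
have [_ [D hD]] := hB; have o0 := opnorm_ge0 hD.
have h1 : 0 < opnorm B + 1 by lra.
have := hf (e / (opnorm B + 1)) (divr_gt0 e0 h1).
apply: filterS => N hN.
rewrite -linB //; apply: le_trans (opnorm_bound hB _) _.
apply: le_trans (ler_wpM2l o0 hN) _.
rewrite mulrA ler_pdivrMr //; nra.
Qed.

End Op.

Section Main.
Variables (R : realType) (X : completeNormedModType R) (tau alpha beta : R) (A : X -> X).
Hypotheses (a0 : 0 < alpha) (b0 : 0 < beta) (t0 : 0 < tau) (ta1 : tau `^ alpha < 1)
  (hA : bounded_op A) (hA1 : opnorm A < 1).
Local Open Scope classical_set_scope.

Definition cf n j := kdisc tau (alpha * j%:R + beta) n.
Definition uu n (x : X) j := cf n j *: oppow A j x.

Lemma cf_ge0 n j : 0 <= cf n j.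
Proof.
apply: kdisc_ge0; apply: ltr_pwDr => //; apply: mulr_ge0; [exact: ltW | exact: ler0n].
Qed.

Lemma qA0 : 0 <= opnorm A.
Proof. have [_ [C hC]] := hA; exact: opnorm_ge0 hC. Qed.

Lemma ubound n : exists C r : R, [/\ 0 <= C, 0 < r, r < 1 &
  forall x k, `|uu n x k| <= C * `|x| * r ^+ k].
Proof.
have [C [r [C0 r0 r1 hC]]] := coef_geom n t0 a0 b0 ta1 qA0 hA1.
exists C, r; split => // x k.
rewrite /uu normrZ ger0_norm ?cf_ge0 //.
apply: le_trans (ler_wpM2l (cf_ge0 n k) (oppow_bound hA k x)) _.
rewrite mulrA [C * _ * _]mulrAC.
by apply: ler_wpM2r => //; exact: hC.
Qed.

Lemma cvg_uu n x : cvgn (series (uu n x)).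
Proof.
have [C [r [C0 r0 r1 hC]]] := ubound n.
apply: normed_cvg.
apply: (@series_le_cvg _ _ (geometric (C * `|x|) r)).
- by move=> k /=.
- by move=> k; apply: geometric_ge0; [apply: mulr_ge0 | exact: ltW].
- by move=> k /=; exact: hC.
- by apply: is_cvg_geometric_series; rewrite ger0_norm // ltW.
Qed.

Definition S n x := lim (series (uu n x) @ \oo).

Lemma S_cvg n x : series (uu n x) @ \oo --> S n x.
Proof. exact: cvg_uu. Qed.


Lemma S_tail n : exists K r : R, [/\ 0 <= K, 0 < r, r < 1 &
  forall x N, `|series (uu n x) N - S n x| <= K * r ^+ N * `|x|].
Proof.
have [C [r [C0 r0 r1 hC]]] := ubound n.
have r1' : 0 < 1 - r by lra.
exists (C / (1 - r)), r; split => //.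
  by apply: divr_ge0 => //; exact: ltW.
move=> x N.
have h1 : (fun M => `|series (uu n x) N - series (uu n x) M|) @ \oo -->
    `|series (uu n x) N - S n x|.
  by apply: cvg_norm; apply: cvgB; [exact: cvg_cst | exact: S_cvg].
apply: (ler_cvg_to h1 (cvg_cst (C / (1 - r) * r ^+ N * `|x|))).
near=> M.
have hNM : (N <= M)%N by near: M; exists N.
rewrite distrC sub_series_geq //.
apply: le_trans (ler_norm_sum _ _ _) _.
have hs : \sum_(N <= i < M) `|uu n x i| <= \sum_(N <= i < M) (C * `|x| * r ^+ i).
  by apply: ler_sum => k _; exact: hC.
apply: le_trans hs _.
rewrite -mulr_sumr.
rewrite -{1}(subnKC hNM) geometric_partial_tail.
have := @geometric_le_lim _ (M - N) (r ^+ N) r (exprn_ge0 N (ltW r0)) r0.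
rewrite ger0_norm ?(ltW r0) // => /(_ r1) hg.
apply: le_trans (ler_wpM2l _ hg) _; first by apply: mulr_ge0.
rewrite /=; lra.
Unshelve. all: by end_near.
Qed.


Lemma series0 (u : nat -> X) : series u 0 = 0.
Proof. by rewrite /series /= big_geq. Qed.

Lemma S_lin n : bounded_op (S n).
Proof.
split.
  move=> a x y.
  have e : series (uu n (a *: x + y)) =
      (fun N => a *: series (uu n x) N + series (uu n y) N).
    apply/funext => N; rewrite /series /= scaler_sumr -big_split /=.
    apply: eq_bigr => k _; rewrite /uu ((oppow_lin hA k).1) scalerDr !scalerA.
    by rewrite mulrC.
  rewrite /S e; apply: cvg_lim => //.
  apply: cvgD; last exact: S_cvg.
  by apply: cvgZ; [exact: cvg_cst | exact: S_cvg].
have [K [r [K0 r0 r1 hK]]] := S_tail n.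
exists K => x; have := hK x 0%N.
by rewrite series0 sub0r normrN expr0 mulr1.
Qed.

Lemma S_comm n x : A (S n x) = S n (A x).
Proof.
have h := cvg_op hA (@S_cvg n x).
have e : (fun N => A (series (uu n x) N)) = series (uu n (A x)).
  apply/funext => N; rewrite /series /= lin_sum //; apply: eq_bigr => k _.
  by rewrite /uu linZ // -oppowS /oppow iterSr.
rewrite e in h; rewrite /S; apply/esym; apply: cvg_lim => //.
Qed.


Lemma kdiscE g n : kdisc tau g n = tau `^ (g - 1) * Kf g n.
Proof. by rewrite /kdisc /Kf mulrA. Qed.

Lemma cf_conv n k : tau * \sum_(j < n.+1) kdisc tau alpha (n - j) * cf j k = cf n k.+1.
Proof.
set g := alpha * k%:R + beta.
have e1 : \sum_(j < n.+1) kdisc tau alpha (n - j) * cf j k =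
    tau `^ (alpha - 1) * tau `^ (g - 1) * Vf alpha g n.
  rewrite /Vf big_mkord mulr_sumr; apply: eq_bigr => j _.
  rewrite /cf -/g !kdiscE; ring.
rewrite e1 Vf_K /cf kdiscE.
have tn0 : tau != 0 by exact: lt0r_neq0.
have e2 : alpha * k.+1%:R + beta - 1 = 1 + (alpha - 1) + (g - 1).
  by rewrite /g -natr1; ring.
have e3 : alpha + g = alpha * k.+1%:R + beta by rewrite /g -natr1; ring.
rewrite e3 e2 !powRD ?powRr1 ?(ltW t0) //; try (by apply/implyP => _).
ring.
Qed.


Lemma cvg_fsum (F : nat -> nat -> X) (L : nat -> X) k :
  (forall j, F j @ \oo --> L j) ->
  (fun N => \sum_(j < k) F j N) @ \oo --> \sum_(j < k) L j.
Proof.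
move=> hF; elim: k => [|k IH].
  have -> : (fun N => \sum_(j < 0) F j N) = fun _ => 0.
    by apply/funext => N; rewrite big_ord0.
  rewrite big_ord0; exact: cvg_cst.
have -> : (fun N => \sum_(j < k.+1) F j N) = fun N => \sum_(j < k) F j N + F k N.
  by apply/funext => N; rewrite big_ord_recr.
rewrite big_ord_recr; apply: cvgD => //.
Qed.

Lemma S_res n x : S n x = kdisc tau beta n *: x +
  tau *: A (\sum_(j < n.+1) kdisc tau alpha (n - j) *: S j x).
Proof.
set G := fun N => tau *: A (\sum_(j < n.+1) kdisc tau alpha (n - j) *: series (uu j x) N).
have h1 : G @ \oo --> tau *: A (\sum_(j < n.+1) kdisc tau alpha (n - j) *: S j x).
  apply: cvgZ; first exact: cvg_cst.
  apply: (cvg_op (f := fun N => \sum_(j < n.+1) kdisc tau alpha (n - j) *: series (uu j x) N) hA).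
  apply: (cvg_fsum (F := fun j N => kdisc tau alpha (n - j) *: series (uu j x) N) (L := fun j => kdisc tau alpha (n - j) *: S j x)) => j.
  by apply: cvgZ; [exact: cvg_cst | exact: S_cvg].
have eG : G = fun N => series (uu n x) N.+1 - kdisc tau beta n *: x.
  apply/funext => N; rewrite /G /series /= big_nat_recl //.
  rewrite {2}/uu /cf mulr0 add0r /= addrC addKr.
  rewrite (lin_sum hA).
  have eA : forall i : 'I_n.+1,
      A (kdisc tau alpha (n - i) *: \sum_(0 <= k < N) uu i x k) =
      \sum_(0 <= k < N) kdisc tau alpha (n - i) *: (cf i k *: oppow A k.+1 x).
    move=> i; rewrite (linZ hA) (lin_sum hA) scaler_sumr; apply: eq_bigr => k _.
    by rewrite /uu (linZ hA).
  rewrite (eq_bigr _ (fun i _ => eA i)) exchange_big scaler_sumr.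
  apply: eq_bigr => k _; rewrite /uu -cf_conv mulr_sumr scaler_suml scaler_sumr.
  by apply: eq_bigr => i _; rewrite !scalerA mulrA.
have h2 : G @ \oo --> S n x - kdisc tau beta n *: x.
  rewrite eG; apply: cvgB; last exact: cvg_cst.
  by have := @S_cvg n x; rewrite -cvg_shiftS.
have e1 : lim (G @ \oo) = tau *: A (\sum_(j < n.+1) kdisc tau alpha (n - j) *: S j x).
  by apply: cvg_lim.
have e2 : lim (G @ \oo) = S n x - kdisc tau beta n *: x by apply: cvg_lim.
by rewrite -e1 e2 addrC subrK.
Qed.


Lemma A_cont : continuous A.
Proof.
move=> x; apply/cvgrPdist_le => e e0.
have [_ [D hD]] := hA; have o0 := opnorm_ge0 hD.
have h1 : 0 < opnorm A + 1 by lra.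
have := (@cvgrPdist_le _ _ _ (nbhs x) _ (fun y : X => y) x).1 (@cvg_id _ (nbhs x)) (e / (opnorm A + 1)) (divr_gt0 e0 h1).
move=> hh; apply: filterS (hh _) => y hy.
rewrite -(linB hA); apply: le_trans (opnorm_bound hA _) _.
apply: le_trans (ler_wpM2l o0 hy) _.
rewrite mulrA ler_pdivrMr //; nra.
Qed.

Lemma graph_closed : closed_op [set: X] A.
Proof.
rewrite /closed_op.
have -> : [set p : X * X | [set: X] p.1 /\ p.2 = A p.1] =
    (fun p : X * X => p.2 - A p.1) @^-1` [set 0].
  apply/seteqP; split => p /=.
    by move=> [_ ->]; rewrite subrr.
  by move/eqP; rewrite subr_eq0 => /eqP ->.
apply: preimage_closed.
  move=> p _; apply: (cvgB (f := fun q : X * X => q.2) (g := fun q : X * X => A q.1)); first exact: cvg_snd.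
  apply: cvg_comp; [exact: cvg_fst | exact: A_cont].
exact/accessible_closed_set1/hausdorff_accessible/norm_hausdorff.
Qed.

Lemma main_sec : exists S : nat -> X -> X,
    (forall n : nat, bounded_op (S n) /\
       (fun N : nat => opnorm (fun x : X =>
            \sum_(j < N) kdisc tau (alpha * j%:R + beta) n *: oppow A j x - S n x))
         @ \oo --> (0 : R)) /\
    discrete_resolvent tau alpha beta [set: X] A S.
Proof.
exists S; split.
  move=> n; split; first exact: S_lin.
  have [K [r [K0 r0 r1 hK]]] := S_tail n.
  have hb : forall N x, `|\sum_(j < N) kdisc tau (alpha * j%:R + beta) n *: oppow A j x
      - S n x| <= K * r ^+ N * `|x|.
    move=> N x; have := hK x N; by rewrite /series /= big_mkord.
  have Kr0 : forall N, 0 <= K * r ^+ N by move=> N; apply: mulr_ge0 => //; apply: exprn_ge0; exact: ltW.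
  apply/cvgrPdist_le => e e0.
  have := @cvg_geometric _ K r; rewrite ger0_norm ?(ltW r0) // => /(_ r1).
  move/cvgrPdist_le/(_ e e0); apply: filterS => N hN.
  rewrite sub0r normrN /= in hN.
  rewrite sub0r normrN ger0_norm; last exact: (opnorm_ge0 (hb N)).
  apply: le_trans (opnorm_le (Kr0 N) (hb N)) _.
  by apply: le_trans (ler_norm _) hN.
split; first exact: graph_closed.
split; first exact: S_lin.
split; first by [].
split; first by move=> n x _; exact: S_comm.
by move=> n x; exact: S_res.
Qed.

End Main.
Unset Implicit Arguments.
Local Open Scope classical_set_scope.
Local Open Scope ring_scope.

Theorem proposition3p12 (R : realType) (X : completeNormedModType R)
  (alpha beta tau : R) (A : X -> X) :
  0 < alpha -> 0 < beta -> 0 < tau -> tau `^ alpha < 1 ->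
  bounded_op A -> opnorm A < 1 ->
  exists S : nat -> X -> X,
    (forall n : nat, bounded_op (S n) /\
       (fun N : nat => opnorm (fun x : X =>
            \sum_(j < N) kdisc tau (alpha * j%:R + beta) n *: oppow A j x - S n x))
         @ \oo --> (0 : R)) /\
    discrete_resolvent tau alpha beta [set: X] A S.
Proof.
move=> a0 b0 t0 ta1 hA hA1.
exact: (main_sec a0 b0 t0 ta1 hA hA1).
Qed.
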